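(* For every prime power $q$, all integers $n$, $r\le\lfloor n/2\rfloor$ and $0<\rho<r$, $$K_{\mathrm{C}}(q,n,r,\rho)\le K_{\mathrm{C}}(q,n-1,r,\rho-1)\le {n-\rho\brack r} \quad\text{and}\quad K_{\mathrm{C}}(q,n,r,\rho)\le K_{\mathrm{C}}(q,n,r-1,\rho-1)\le {n\brack r-\rho}.$$
   Context: ${m\brack k}=\prod_{i=0}^{k-1}\frac{q^m-q^i}{q^k-q^i}$ is the Gaussian binomial (the number of $k$-dimensional subspaces of $\mathrm{GF}(q)^m$). $E_r(q,n)$ is the set of $r$-dimensional subspaces of $\mathrm{GF}(q)^n$ with injection distance $d_{\mathrm{I}}(U,V)=\dim(U+V)-\min\{\dim U,\dim V\}$; the covering radius of a nonempty $\mathcal{C}\subseteq E_r(q,n)$ is $\max_U\min_{C\in\mathcal{C}}d_{\mathrm{I}}(U,C)$, and $K_{\mathrm{C}}(q,n,r,\rho)$ is the minimum cardinality of a subset of $E_r(q,n)$ with covering radius at most $\rho$ (for any $0\le r\le n$, $\rho\ge 0$). *)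

(* Defs.v *)
From mathcomp Require Import all_boot all_order all_algebra.
Set Implicit Arguments. Unset Strict Implicit. Unset Printing Implicit Defensive.
Import Order.TTheory GRing.Theory Num.Theory.

Section Grass.
Variable F : finFieldType.

(* the canonical representatives of subspaces of F^n: matrices equal to their
   own generated row space <<A>>; the row space of A is the subspace. *)
Definition is_subspace (n : nat) (A : 'M[F]_n) : bool := (<<A>>%MS == A).

Definition Egr (n r : nat) : {set 'M[F]_n} :=
  [set A : 'M[F]_n | is_subspace A && (\rank A == r)].

Definition dinj (n : nat) (U V : 'M[F]_n) : nat :=
  (\rank (U + V)%MS - minn (\rank U) (\rank V))%N.

Definition covers (n r rho : nat) (C : {set 'M[F]_n}) : bool :=
  [&& C \subset Egr n r, C != set0 &
      [forall U in Egr n r, exists c in C, dinj U c <= rho]].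

(* K_C(q,n,r,rho), q = #|F|: minimum cardinality of such a code.
   (The default value #|Egr n r| is attained by Egr n r itself whenever
   Egr n r is nonempty, so it never affects the minimum in that case.) *)
Definition KC (n r rho : nat) : nat :=
  \big[minn/#|Egr n r|]_(C : {set 'M[F]_n} | covers r rho C) #|C|.

End Grass.

Definition gauss_binom (q m k : nat) : rat :=
  (\prod_(i < k) (((q ^ m)%:R - (q ^ i)%:R) / ((q ^ k)%:R - (q ^ i)%:R)))%R.

(* Main.v *)
Require Import Defs.
From mathcomp Require Import all_boot all_order all_algebra.
From mathcomp Require Import zify.
Set Implicit Arguments. Unset Strict Implicit. Unset Printing Implicit Defensive.
Import Order.TTheory GRing.Theory Num.Theory.

Section Geo.
Variable F : finFieldType.
Local Open Scope ring_scope.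

Lemma tri m1 m2 m3 n (X : 'M[F]_(m1, n)) (Y : 'M[F]_(m2, n)) (Z : 'M[F]_(m3, n)) :
  (\rank (X + Z) + \rank Y <= \rank (X + Y) + \rank (Y + Z))%N.
Proof.
rewrite -(mxrank_sum_cap (X + Y)%MS (Y + Z)%MS); apply: leq_add; apply: mxrankS.
  rewrite addsmx_sub; apply/andP; split.
    by apply: submx_trans (addsmxSl X Y) _; apply: addsmxSl.
  by apply: submx_trans (addsmxSr Y Z) _; apply: addsmxSr.
by rewrite sub_capmx addsmxSr addsmxSl.
Qed.

Lemma sub_rank n (A : 'M[F]_n) p : (p <= \rank A)%N ->
  exists X : 'M[F]_n, (X <= A)%MS /\ \rank X = p.
Proof.
move=> hp; exists (pid_mx p *m row_ebase A); split.
  have -> : (pid_mx p : 'M[F]_n) = (pid_mx p : 'M[F]_(n, \rank A)) *m pid_mx (\rank A).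
    by rewrite mul_pid_mx (minn_idPl hp) (minn_idPr hp).
  rewrite -mulmxA; apply: submx_trans (submxMl _ _) _.
  by rewrite -/(row_base A) eq_row_base.
rewrite mxrankMfree ?row_free_unit ?row_ebase_unit // rank_pid_mx //.
all: exact: leq_trans hp (rank_leq_col _).
Qed.

Lemma sup_rank n (A : 'M[F]_n) k : (\rank A <= k)%N -> (k <= n)%N ->
  exists B : 'M[F]_n, (A <= B)%MS /\ \rank B = k.
Proof.
move=> h1 h2; have [|Y [sY rY]] := @sub_rank n (A^C)%MS (k - \rank A).
  by rewrite mxrank_compl leq_sub2r.
exists (A + Y)%MS; split; first exact: addsmxSl.
rewrite mxrank_disjoint_sum ?rY ?subnKC //.
apply/eqP; rewrite -submx0 -(capmx_compl A); exact: capmxS.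
Qed.

Lemma rank_addsxx n (U : 'M[F]_n) : \rank (U + U)%MS = \rank U.
Proof. have /addsmx_idPl h := submx_refl U; by rewrite h. Qed.

Lemma KC_le n r s (C : {set 'M[F]_n}) : covers r s C -> (KC F n r s <= #|C|)%N.
Proof. move=> hC; rewrite /KC -minEnat; have := bigmin_le_cond #|Egr F n r| (fun C : {set 'M[F]_n} => #|C|) hC; by []. Qed.

Lemma Egr_ne n r : (r <= n)%N -> Egr F n r != set0.
Proof.
move=> h; apply/set0Pn; exists <<(pid_mx r : 'M[F]_n)>>%MS.
rewrite inE /is_subspace genmx_id eqxx /= mxrank_gen rank_pid_mx //.
Qed.

Lemma covers_Egr n r s : (r <= n)%N -> covers r s (Egr F n r).
Proof.
move=> h; rewrite /covers subxx Egr_ne //=.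
apply/forall_inP => U UE; apply/exists_inP; exists U => //.
by rewrite /dinj rank_addsxx minnn subnn.
Qed.

Lemma KC_le_Egr n r s : (r <= n)%N -> (KC F n r s <= #|Egr F n r|)%N.
Proof. by move=> h; apply/KC_le/covers_Egr. Qed.

Lemma KC_transfer m n k r s t (phi : 'M[F]_m -> 'M[F]_n) :
  (k <= m)%N ->
  (forall c, c \in Egr F m k -> phi c \in Egr F n r) ->
  (forall U, U \in Egr F n r -> exists2 V, V \in Egr F m k &
      forall c, c \in Egr F m k -> (dinj V c <= s)%N -> (dinj U (phi c) <= t)%N) ->
  (KC F n r t <= KC F m k s)%N.
Proof.
move=> hk hphi hU.
have cov : forall C : {set 'M[F]_m}, covers k s C -> covers r t (phi @: C).
  move=> C /and3P[sC nC /forall_inP fC]; apply/and3P; split.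
  - apply/subsetP => x /imsetP[c cC ->]; apply: hphi; exact: (subsetP sC).
  - by case/set0Pn: nC => c cC; apply/set0Pn; exists (phi c); apply: imset_f.
  - apply/forall_inP => U UE; have [V VE hV] := hU U UE.
    have /exists_inP[c cC hc] := fC V VE.
    apply/exists_inP; exists (phi c); first exact: imset_f.
    by apply: hV => //; apply: (subsetP sC).
have key : forall C : {set 'M[F]_m}, covers k s C -> (KC F n r t <= #|C|)%N.
  move=> C hC; apply: leq_trans (KC_le (cov C hC)) _; exact: leq_imset_card.
rewrite {2}/KC; apply: (big_ind (fun x => (KC F n r t <= x)%N)) => //.
- by apply: key; apply: covers_Egr.
- by move=> x y hx hy; rewrite leq_min hx hy.
Qed.

End Geo.
Section Ineq.
Variable F : finFieldType.
Local Open Scope ring_scope.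

Lemma inE_Egr n r (U : 'M[F]_n) : (U \in Egr F n r) = (<<U>>%MS == U) && (\rank U == r).
Proof. by rewrite inE. Qed.

Lemma dinj_eq n (U V : 'M[F]_n) : \rank U = \rank V -> dinj U V = (\rank (U + V)%MS - \rank U)%N.
Proof. by move=> e; rewrite /dinj e minnn. Qed.

Lemma step1 m r s : (r <= m)%N -> (KC F m.+1 r s.+1 <= KC F m r s)%N.
Proof.
move=> hr.
pose E : 'M[F]_(m, m.+1) := pid_mx m.
have rE : \rank E = m by rewrite rank_pid_mx.
have fE : row_free E by rewrite /row_free rE.
pose phi (c : 'M[F]_m) : 'M[F]_m.+1 := <<c *m E>>%MS.
have rphi c : \rank (phi c) = \rank c by rewrite mxrank_gen mxrankMfree.
have phiE c : (phi c :=: c *m E)%MS by exact: genmxE.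
apply: (KC_transfer (phi := phi) hr).
  move=> c; rewrite !inE => /andP[_ /eqP rc].
  by rewrite /is_subspace /phi genmx_id eqxx rphi rc /=.
move=> U; rewrite !inE => /andP[sU /eqP rU].
pose I := (U :&: E)%MS.
pose W := I *m pinvmx E.
have WE : W *m E = I by rewrite mulmxKpV // capmxSr.
have rW : \rank W = \rank I by rewrite -WE mxrankMfree.
have rI1 : (r <= (\rank I).+1)%N.
  have := mxrank_sum_cap U E; rewrite rU rE -/I => h.
  have := rank_leq_col (U + E)%MS; lia.
have rIr : (\rank I <= r)%N by rewrite -rU mxrankS // capmxSl.
have hW : (\rank <<W>>%MS <= r)%N by rewrite mxrank_gen rW.
have [B [sB rB]] := sup_rank hW hr.
exists <<B>>%MS.
  by rewrite inE /is_subspace genmx_id eqxx mxrank_gen rB /=.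
move=> c; rewrite inE => /andP[_ /eqP rc] hd.
pose V := <<B>>%MS.
have IV : (I <= phi V)%MS.
  rewrite (phiE V) -WE; apply: submxMr.
  have h1 : (W <= <<W>>)%MS by rewrite genmxE.
  have h2 : (B <= V)%MS by rewrite genmxE.
  exact: submx_trans h1 (submx_trans sB h2).
have rV : \rank (phi V) = r by rewrite rphi mxrank_gen rB.
have t1 := tri U I (phi V).
have e1 : \rank (U + I)%MS = r.
  have /addsmx_idPl h : (I <= U)%MS by rewrite capmxSl.
  by rewrite h.
have e2 : \rank (I + phi V)%MS = r.
  have /addsmx_idPr h := IV.
  by rewrite h.
have t2 := tri U (phi V) (phi c).
have e3 : \rank (phi V + phi c)%MS = \rank (V + c)%MS.
  rewrite (adds_eqmx (phiE V) (phiE c)) -(mxrankMfree (V + c)%MS fE).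
  by rewrite addsmxMr.
move: hd; rewrite dinj_eq ?mxrank_gen ?rB ?rc // => hd.
have : (r <= \rank (V + c)%MS)%N.
  by rewrite -rB -(mxrank_gen B) -/V mxrankS // addsmxSl.
rewrite dinj_eq ?rU ?rphi ?rc //.
move: hd t1 t2; rewrite -/V rV e1 e2 e3 => hd t1 t2.
lia.
Qed.

Lemma step2 n k s : (k.+1 <= n)%N -> (KC F n k.+1 s.+1 <= KC F n k s)%N.
Proof.
move=> hk.
pose ext (c : 'M[F]_n) : 'M[F]_n :=
  <<odflt c [pick B | (c <= B)%MS && (\rank B == k.+1)]>>%MS.
have extP c : c \in Egr F n k -> (c <= ext c)%MS /\ \rank (ext c) = k.+1.
  rewrite inE => /andP[_ /eqP rc]; rewrite /ext.
  case: pickP => [B /andP[cB /eqP rB] | no] /=.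
    by rewrite genmxE mxrank_gen.
  have hc : (\rank c <= k.+1)%N by rewrite rc.
  have [B [cB rB]] := sup_rank hc hk.
  by have := no B; rewrite cB rB eqxx.
apply: (KC_transfer (phi := ext) (ltnW hk)).
  move=> c cE; have [_ rc] := extP c cE.
  by rewrite inE /is_subspace /ext genmx_id eqxx -/(ext c) rc /=.
move=> U; rewrite !inE => /andP[sU /eqP rU].
have hU : (k <= \rank U)%N by rewrite rU.
have [X [sX rX]] := sub_rank hU.
exists <<X>>%MS.
  by rewrite inE /is_subspace genmx_id eqxx mxrank_gen rX /=.
move=> c cE hd; have [cB rB] := extP c cE.
move: cE; rewrite inE => /andP[_ /eqP rc].
have t1 := tri U <<X>>%MS (ext c).
have t2 := tri <<X>>%MS c (ext c).
have e1 : \rank (U + <<X>>)%MS = k.+1.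
  have /addsmx_idPl h : (<<X>> <= U)%MS by rewrite genmxE.
  by rewrite h.
have e2 : \rank (c + ext c)%MS = k.+1.
  have /addsmx_idPr h := cB.
  by rewrite h.
move: hd; rewrite /dinj mxrank_gen rX rc minnn rU rB minnn.
rewrite mxrank_gen rX in t1 t2.
lia.
Qed.

Lemma iter1 m r s j : (r <= m)%N -> (KC F (m + j) r (s + j) <= KC F m r s)%N.
Proof.
move=> hr; elim: j => [|j IH]; first by rewrite !addn0.
rewrite !addnS; apply: leq_trans IH; apply: step1; lia.
Qed.

Lemma iter2 n k s j : (k + j <= n)%N -> (KC F n (k + j) (s + j) <= KC F n k s)%N.
Proof.
elim: j => [|j IH] h; first by rewrite !addn0.
rewrite !addnS; apply: leq_trans (IH _); last lia; apply: step2; lia.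
Qed.

End Ineq.

Section Count.
Local Open Scope ring_scope.
Variable F : finFieldType.
Local Notation p := #|F|.

Lemma card_rowfree n m : (m <= n)%N ->
  #|[pred A : 'M[F]_(m, n) | \rank A == m]| = (\prod_(i < m) (p ^ n - p ^ i))%N.
Proof.
pose fr m := [pred A : 'M[F]_(m, n) | \rank A == m].
rewrite -/(fr m).
elim: m => [_ | m IHm /ltnW-le_mn].
  rewrite big_ord0 (@eq_card1 _ (0 : 'M_(0, n))%R) //= => A.
  by rewrite flatmx0 !inE mxrank.unlock !eqxx.
rewrite big_ord_recr /= -{}IHm //.
rewrite -sum_nat_const /= -sum1_card -add1n.
rewrite (partition_big dsubmx (fr m)) /= => [|A]; last first.
  rewrite !inE -{1}(vsubmxK A); move: {A}(_ A) (_ A) => Ad Au Afull.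
  rewrite eqn_leq rank_leq_row -(leq_add2l (\rank Au)) -mxrank_sum_cap.
  rewrite {1 3}[@mxrank]lock addsmxE (eqnP Afull) -lock -addnA.
  by rewrite leq_add ?rank_leq_row ?leq_addr.
apply: eq_bigr => A rAm; rewrite (reindex (col_mx^~ A)) /=; last first.
  exists usubmx => [v _ | vA]; first by rewrite col_mxKu.
  by case/andP=> _ /eqP <-; rewrite vsubmxK.
transitivity #|~: [set v *m A | v in 'rV_m]|; last first.
  rewrite cardsCs setCK card_imset ?card_mx ?card_ord ?mul1n //.
  have [B AB1] := row_freeP rAm; apply: can_inj (mulmx^~ B) _ => v.
  by rewrite -mulmxA AB1 mulmx1.
rewrite -sum1_card; apply: eq_bigl => v; rewrite !inE col_mxKd eqxx.
rewrite andbT eqn_leq rank_leq_row /= -(leq_add2r (\rank (v :&: A)%MS)).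
rewrite -addsmxE mxrank_sum_cap (eqnP rAm) addnAC leq_add2r.
rewrite (ltn_leqif (mxrank_leqif_sup _)) ?capmxSl // sub_capmx submx_refl.
by congr (~~ _); apply/submxP/imsetP=> [] [u]; exists u.
Qed.
End Count.
Section Counting.
Variable F : finFieldType.
Local Open Scope ring_scope.
Local Notation q := #|F|.

Lemma Egr_card m k : (k <= m)%N ->
  (#|Egr F m k| * \prod_(i < k) (q ^ k - q ^ i) <= \prod_(i < k) (q ^ m - q ^ i))%N.
Proof.
move=> hk.
have c1 : #|[set g : 'M[F]_k | \rank g == k]| = (\prod_(i < k) (q ^ k - q ^ i))%N.
  by rewrite -(card_rowfree F (leqnn k)); apply: eq_card => g; rewrite inE.
have c2 : #|[set g : 'M[F]_(k, m) | \rank g == k]| = (\prod_(i < k) (q ^ m - q ^ i))%N.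
  by rewrite -(card_rowfree F hk); apply: eq_card => g; rewrite inE.
rewrite -c1 -c2 -cardsX.
pose X (U : 'M[F]_m) : 'M[F]_(k, m) := pid_mx k *m row_ebase U.
pose f (p : 'M[F]_m * 'M[F]_k) := p.2 *m X p.1.
have XP U : U \in Egr F m k -> (X U :=: U)%MS /\ \rank (X U) = k.
  rewrite inE => /andP[_ /eqP rU].
  have rX : \rank (X U) = k.
    by rewrite mxrankMfree ?row_free_unit ?row_ebase_unit // rank_pid_mx.
  split => //.
  have sUX : (U <= X U)%MS.
    rewrite -{1}(mulmx_ebase U) rU.
    have -> : (pid_mx k : 'M[F]_m) = (pid_mx k : 'M[F]_(m, k)) *m pid_mx k.
      by rewrite mul_pid_mx !minnn.
    by rewrite !mulmxA -mulmxA submxMl.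
  have := mxrank_leqif_sup sUX; rewrite rU rX => -[_].
  by rewrite eqxx => /esym sXU; apply/eqmxP; rewrite sUX sXU.
have <- : #|f @: setX (Egr F m k) [set g : 'M[F]_k | \rank g == k]| =
    #|setX (Egr F m k) [set g : 'M[F]_k | \rank g == k]|.
  apply: card_in_imset => -[U g] [U' g'].
  move=> /setXP[UE]; rewrite inE => rg /setXP[U'E]; rewrite inE => rg'.
  rewrite /f /= => e.
  have [XU rXU] := XP U UE; have [XU' rXU'] := XP U' U'E.
  have fg : row_full g by rewrite /row_full.
  have fg' : row_full g' by rewrite /row_full.
  have eUU : (U :=: U')%MS.
    apply: eqmx_trans (eqmx_sym XU) _.
    apply: eqmx_trans (eqmx_sym (eqmxMfull (X U) fg)) _.
    rewrite e; apply: eqmx_trans (eqmxMfull (X U') fg') _; exact: XU'.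
  have eU : U = U'.
    move: UE U'E; rewrite !inE /is_subspace => /andP[/eqP <- _] /andP[/eqP <- _].
    exact: eq_genmx.
  subst U'; congr (_, _).
  have /row_freeP[B XB] : row_free (X U) by rewrite /row_free rXU.
  by rewrite -[g]mulmx1 -[g']mulmx1 -XB (mulmxA g) (mulmxA g') e.
apply: subset_leq_card; apply/subsetP => x /imsetP[[U g] /setXP[UE]].
rewrite !inE => rg -> /=; have [_ rXU] := XP U UE.
by rewrite /f mxrankMfree ?rg // /row_free rXU.
Qed.

Lemma Egr_gauss m k : (k <= m)%N ->
  ((#|Egr F m k|)%:R <= gauss_binom q m k :> rat).
Proof.
move=> hk.
have q2 : (1 < q)%N.
  apply/card_gt1P; exists 0, 1; split => //; rewrite eq_sym; exact: oner_neq0.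
have -> : gauss_binom q m k =
    (\prod_(i < k) (q ^ m - q ^ i)%N%:R / \prod_(i < k) (q ^ k - q ^ i)%N%:R :> rat).
  rewrite /gauss_binom -prodf_div; apply: eq_bigr => i _.
  have hi : (i < k)%N := ltn_ord i.
  rewrite !natrB // leq_pexp2l ?(ltnW q2) //; lia.
rewrite ler_pdivlMr; last first.
  rewrite -natr_prod ltr0n prodn_gt0 // => i; rewrite subn_gt0 ltn_exp2l //.
rewrite -!natr_prod -natrM ler_nat; exact: Egr_card.
Qed.

End Counting.

Unset Implicit Arguments.

Theorem lemma8 (F : finFieldType) (n r rho : nat) :
  (r <= n./2)%N -> (0 < rho)%N -> (rho < r)%N ->
  [/\ (KC F n r rho <= KC F n.-1 r rho.-1)%N,
      ((KC F n.-1 r rho.-1)%:R <= gauss_binom #|F| (n - rho) r :> rat)%R,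
      (KC F n r rho <= KC F n r.-1 rho.-1)%N
    & ((KC F n r.-1 rho.-1)%:R <= gauss_binom #|F| n (r - rho) :> rat)%R].
Proof.
move=> hr hrho hrr.
have h2 : (r.*2 <= n)%N by rewrite -geq_half_double.
have hn : n = (n.-1).+1 by lia.
have hs : rho = (rho.-1).+1 by lia.
have hr' : r = (r.-1).+1 by lia.
split.
- rewrite {1}hn {1}hs; apply: step1; lia.
- apply: Order.POrderTheory.le_trans (Egr_gauss F (_ : (r <= n - rho)%N)); last lia.
  rewrite ler_nat; apply: leq_trans (KC_le_Egr F 0 (_ : (r <= n - rho)%N)); last lia.
  have -> : n.-1 = (n - rho + rho.-1)%N by lia.
  have -> : rho.-1 = (0 + rho.-1)%N by [].
  rewrite [X in KC _ _ _ X]add0n.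
  apply: iter1; lia.
- rewrite {1}hr' {1}hs; apply: step2; lia.
- apply: Order.POrderTheory.le_trans (Egr_gauss F (_ : (r - rho <= n)%N)); last lia.
  rewrite ler_nat; apply: leq_trans (KC_le_Egr F 0 (_ : (r - rho <= n)%N)); last lia.
  have -> : r.-1 = (r - rho + rho.-1)%N by lia.
  have := @iter2 F n (r - rho) 0 rho.-1; rewrite add0n; apply; lia.
Qed.
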